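(* Let $a,b$ be integers with $0<b<a$, let $S=\langle a,a+1,\ldots,a+b\rangle$ with conductor $c$, and let $m\ge 2c-1$. Let $M$ be an $(S,m,r)$-amenable set whose shadow $L_M$ has $t$ elements. Then there exists an $(S,m,r)$-amenable set $T$ whose shadow $L_T$ is an interval of integers containing $m$ and satisfies $\sharp L_T\le\sharp L_M$.
   Context: For $x\in S$, $\mathrm D(x)=\{\alpha\in S\mid x-\alpha\in S\}$. A set $M=\{m_1<\cdots<m_r\}\subseteq S$ with $2c-1\le m=m_1$ is $(S,m,r)$-amenable if $\mathrm D(m_i)\cap[m,\infty)\subseteq M$ for all $i$. The ground is $\{m,m+1,\ldots,m+a+b-1\}$, and the shadow of $M$ is $M\cap\{m,\ldots,m+a+b-1\}$. *)

(* Defs.v *)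
From mathcomp Require Import all_boot.
Set Implicit Arguments. Unset Strict Implicit. Unset Printing Implicit Defensive.

Definition inS (a b : nat) (x : nat) : Prop :=
  exists s : seq nat, all (fun g => (a <= g) && (g <= a + b)) s /\ sumn s = x.

Definition is_conductor (S : nat -> Prop) (c : nat) : Prop :=
  (forall n, c <= n -> S n) /\
  (forall c', (forall n, c' <= n -> S n) -> c <= c').

(* D(x) = { alpha in S | x - alpha in S } (integers, so alpha <= x). *)
Definition inD (S : nat -> Prop) (x alpha : nat) : Prop :=
  S alpha /\ alpha <= x /\ S (x - alpha).

Definition amenable (S : nat -> Prop) (c m r : nat) (M : seq nat) : Prop :=
  [/\ sorted ltn M, size M = r, 0 < r, nth 0 M 0 = m
    & [/\ (forall x, x \in M -> S x),
      2 * c - 1 <= m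
    & forall x alpha, x \in M -> inD S x alpha -> m <= alpha -> alpha \in M]].

Definition shadow (a b m : nat) (M : seq nat) : seq nat :=
  [seq x <- M | (m <= x) && (x < m + a + b)].

(* Main.v *)
Require Import Defs.
From mathcomp Require Import all_boot zify.

Fixpoint Acyc (n : nat) (p : nat -> bool) (e : nat) (x : nat) : bool :=
  match e with 0 => p x | e'.+1 => Acyc n p e' x || Acyc n p e' ((x + n.-1) %% n) end.

Lemma modn_pred_succ n x : 0 < n -> x < n -> ((x + n.-1) %% n + 1) %% n = x.
Proof.
move=> n0 xn; rewrite modnDml -addnA addn1 prednK // modnDr modn_small //.
Qed.

Lemma Acyc_spec n p e x : 0 < n -> x < n -> Acyc n p e x ->
  exists v e', [/\ v < n, p v, e' <= e & x = (v + e') %% n].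
Proof.
move=> n0; elim: e x => [|e IH] x xn /=.
  by move=> px; exists x, 0; rewrite addn0 modn_small.
case/orP => [/(IH _ xn)|].
  by case=> v [e' [vn pv le ->]]; exists v, e'; split => //; apply: leqW.
move/(IH _ (ltn_pmod _ n0)) => [v [e' [vn pv le Hy]]].
exists v, e'.+1; split => //.
by rewrite -(modn_pred_succ _ _ n0 xn) Hy modnDml addn1 addnS.
Qed.

Lemma Acyc_mono n p e x : Acyc n p e x -> Acyc n p e.+1 x.
Proof. by move=> /= ->. Qed.

Lemma count_strict (p q : pred nat) s x : (forall y, p y -> q y) -> x \in s ->
  q x -> ~~ p x -> count p s < count q s.
Proof.
move=> Hpq; elim: s => //= y s IH; rewrite inE => /orP [/eqP <-| xs] qx npx.
  rewrite (negbTE npx) qx /=. have:= sub_count Hpq s. lia.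
have := IH xs qx npx. move: (Hpq y); case: (p y); case: (q y) => //= H.
  by have := H isT.
all: lia.
Qed.

Lemma count_sub_in (p q : pred nat) s : {in s, forall x, p x -> q x} -> count p s <= count q s.
Proof.
elim: s => //= y s IH H.
have := IH (fun z zs => H z (mem_behead (s:=y::s) zs)).
move: (H y (mem_head _ _)); case: (p y); case: (q y) => //= H'.
  by have := H' isT.
all: lia.
Qed.

Lemma Acyc_grow n p e : 0 < n -> (exists x, x < n /\ Acyc n p e x) ->
  minn (count (Acyc n p e) (iota 0 n)).+1 n <= count (Acyc n p e.+1) (iota 0 n).
Proof.
move=> n0 [x0 [x0n Ax0]].
have hsub: forall y, Acyc n p e y -> Acyc n p e.+1 y by move=> y /= ->.
have Hc := sub_count hsub (iota 0 n).
case: (boolP (all (Acyc n p e) (iota 0 n))) => [Hall|Hnall].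
  move: Hall; rewrite all_count size_iota => /eqP Hn. lia.
have [x xin nAx] := allPn Hnall.
case: (boolP (has (fun y => Acyc n p e ((y + n.-1) %% n) && ~~ Acyc n p e y) (iota 0 n))).
  case/hasP => y yin /andP [H1 H2].
  have := count_strict _ _ _ _ hsub yin (_ : Acyc n p e.+1 y) H2.
  have -> : Acyc n p e.+1 y by rewrite /= H1 orbT.
  move=> /(_ isT). lia.
move/hasPn => Hno.
have Hk: forall k, Acyc n p e ((x0 + k) %% n).
  elim=> [|k IHk]; first by rewrite addn0 modn_small.
  have yn : (x0 + k.+1) %% n < n by apply: ltn_pmod.
  have := Hno _ (_ : (x0 + k.+1) %% n \in iota 0 n).
  rewrite mem_iota add0n yn => /(_ isT).
  have -> : ((x0 + k.+1) %% n + n.-1) %% n = (x0 + k) %% n.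
    rewrite modnDml (_ : x0 + k.+1 + n.-1 = x0 + k + n) ?modnDr //; lia.
  by rewrite IHk /= negbK.
move: xin; rewrite mem_iota add0n => xn.
have := Hk (x + n - x0).
rewrite (_ : x0 + (x + n - x0) = x + n); last by lia.
by rewrite modnDr modn_small // (negbTE nAx).
Qed.

Lemma Acyc_count n (p : pred nat) e : 0 < n -> (exists x, x < n /\ p x) ->
  minn (count p (iota 0 n) + e) n <= count (Acyc n p e) (iota 0 n).
Proof.
move=> n0 [x [xn px]]; elim: e => [|e IH].
  by rewrite addn0 geq_minl.
have Ae : Acyc n p e x.
  by elim: (e) => [|e' IH'] //=; rewrite IH'.
have := Acyc_grow n p e n0 (ex_intro _ x (conj xn Ae)). lia.
Qed.

Definition cntb (n : nat) (P : nat -> bool) j := count (fun x => P (x + j * n)) (iota 0 n).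
Definition Qb n P u := u %% n < cntb n P (u %/ n).

Lemma KL a b (P : nat -> bool) : 0 < b -> b < a ->
  (forall u g, P u -> a <= g <= a + b -> g <= u -> P (u - g)) ->
  forall j, 0 < cntb (a+b) P j.+1 -> minn (cntb (a+b) P j.+1 + b) (a+b) <= cntb (a+b) P j.
Proof.
move=> b0 ba HP j Hc.
set n := a + b.
have n0 : 0 < n by rewrite /n; lia.
pose V := fun x => P (x + j.+1 * n).
have Hex : exists x, x < n /\ V x.
  move: Hc; rewrite /cntb -has_count => /hasP [x]; rewrite mem_iota add0n => xn Vx.
  by exists x.
apply: leq_trans (Acyc_count n V b n0 Hex) _.
apply: count_sub_in => x; rewrite mem_iota add0n => xn /(Acyc_spec n V b x n0 xn).
case=> v [e' [vn Vv le ->]].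
have Hg : a <= n - e' <= a + b by rewrite /n; lia.
have Hgu : n - e' <= v + j.+1 * n by rewrite mulSn; lia.
have H1 := HP _ _ Vv Hg Hgu.
case: (ltnP (v + e') n) => Hve.
  rewrite modn_small //.
  by rewrite (_ : v + e' + j * n = v + j.+1 * n - (n - e')) // mulSn; lia.
have Hm : (v + e') %% n = v + e' - n.
  rewrite -{1}(subnK Hve) modnDr modn_small //; lia.
rewrite Hm.
have Hg2 : a <= n <= a + b by rewrite /n; lia.
have Hgu2 : n <= v + e' - n + j.+1 * n by rewrite mulSn; lia.
have H2 := HP (v + e' - n + j.+1 * n) n.
rewrite (_ : v + e' - n + j.+1 * n - n = v + e' - n + j * n) in H2; last by rewrite mulSn; lia.
apply: H2 => //.
by rewrite (_ : v + e' - n + j.+1 * n = v + j.+1 * n - (n - e')) // mulSn; lia.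
Qed.

Lemma GS a b (P : nat -> bool) : 0 < b -> b < a ->
  (forall u g, P u -> a <= g <= a + b -> g <= u -> P (u - g)) ->
  forall u g, Qb (a+b) P u -> a <= g <= a + b -> g <= u -> Qb (a+b) P (u - g).
Proof.
move=> b0 ba HP u g; set n := a + b => Qu Hg gu.
have n0 : 0 < n by rewrite /n; lia.
move: Qu; rewrite /Qb.
set rho := u %% n; set j := u %/ n => Qu.
have Hu : u = j * n + rho by rewrite /j /rho -divn_eq.
have rn : rho < n by apply: ltn_pmod.
case: (leqP g rho) => Hgr.
  have -> : u - g = j * n + (rho - g) by lia.
  rewrite modnMDl divnMDl // modn_small ?divn_small ?addn0; lia.
have j0 : 0 < j.
  case: (posnP j) => // j0; move: Hu; rewrite j0 mul0n add0n; lia.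
have -> : u - g = j.-1 * n + (rho + (n - g)).
  rewrite Hu -{1}(prednK j0) mulSn; lia.
have Hr2 : rho + (n - g) < n by lia.
rewrite modnMDl divnMDl // modn_small // divn_small // addn0.
have := KL _ _ _ b0 ba HP j.-1.
rewrite prednK // => /(_ (leq_ltn_trans (leq0n _) Qu)).
rewrite -/n; lia.
Qed.

Lemma Qb_S a b (P : nat -> bool) : 0 < b -> b < a ->
  (forall u g, P u -> a <= g <= a + b -> g <= u -> P (u - g)) ->
  forall s u, Qb (a+b) P u -> all (fun g => (a <= g) && (g <= a + b)) s -> sumn s <= u ->
  Qb (a+b) P (u - sumn s).
Proof.
move=> b0 ba HP; elim=> [|g s IH] u Qu /=; first by rewrite subn0.
case/andP => Hg Hs Hsum.
rewrite subnDA; apply: IH => //; last by lia.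
by apply: GS => //; lia.
Qed.

Lemma count_blocks (p : pred nat) n K :
  count p (iota 0 (K * n)) = \sum_(0 <= j < K) count (fun x => p (x + j * n)) (iota 0 n).
Proof.
elim: K => [|K IH]; first by rewrite mul0n big_geq.
rewrite big_nat_recr //= mulSn addnC iotaD count_cat IH; congr (_ + _).
rewrite (_ : iota (0 + K * n) n = map (addn (K * n)) (iota 0 n)); last by rewrite -iotaDl addn0 add0n.
rewrite count_map; apply: eq_count => x /=; by rewrite addnC.
Qed.

Lemma filter_iota_lt c n : c <= n -> [seq x <- iota 0 n | x < c] = iota 0 c.
Proof.
move=> cn; rewrite -(subnKC cn) iotaD filter_cat add0n.
rewrite (eq_in_filter (a2 := predT)); last by move=> x; rewrite mem_iota.
rewrite filter_predT (eq_in_filter (a2 := pred0)); last first.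
  by move=> x; rewrite mem_iota /= => /andP [H _]; rewrite ltnNge H.
by rewrite filter_pred0 cats0.
Qed.

Lemma filter_swap (p q : pred nat) s : filter p (filter q s) = filter q (filter p s).
Proof. by rewrite -!filter_predI; apply: eq_filter => x /=; rewrite andbC. Qed.

Lemma mem_sumn x s : x \in s -> x <= sumn s.
Proof.
elim: s => //= y s IH; rewrite inE => /orP [/eqP ->|/IH]; lia.
Qed.

Theorem proposition4p26 (a b c m r : nat) (M : seq nat) :
  0 < b -> b < a ->
  is_conductor (inS a b) c ->
  2 * c - 1 <= m ->
  amenable (inS a b) c m r M ->
  exists T : seq nat,
    amenable (inS a b) c m r T /\
    (exists k, 0 < k /\ shadow a b m T = iota m k) /\
    size (shadow a b m T) <= size (shadow a b m M).
Proof.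
move=> b0 ba [Hcond _] Hm [Hsort Hsize Hr Hnth [HMS Hm' HMD]].
have c1 : 0 < c.
  case: (posnP c) => // c0.
  have [s [Hall Hsum]] := Hcond 1 (ltac:(by rewrite c0)).
  case: s Hall Hsum => [|g s] //= /andP [/andP [Hg _] _]; lia.
have cm : c <= m by lia.
have HSm : forall x, m <= x -> inS a b x by move=> x Hx; apply: Hcond; lia.
set n := a + b.
have n0 : 0 < n by rewrite /n; lia.
have Mge : forall x, x \in M -> m <= x.
  case: M Hsort Hsize Hnth {HMS HMD} => [|x0 M'] Hs Hsz Hn; first by move: Hsz Hr => /= <-.
  move: Hn => /= Hx0; subst x0.
  have := order_path_min ltn_trans Hs => /allP Hall x.
  rewrite inE => /orP [/eqP -> //|/Hall]; lia.
pose P u := (m + u) \in M.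
have HP : forall u g, P u -> a <= g <= a + b -> g <= u -> P (u - g).
  move=> u g Pu Hg gu; rewrite /P.
  apply: (HMD (m + u)) => //; last by lia.
  split; first by apply: HSm; lia.
  split; first by lia.
  rewrite (_ : m + u - (m + (u - g)) = g); last by lia.
  by exists [:: g]; rewrite /= Hg addn0.
pose K := (sumn M).+1.
pose N := K * n.
have Pb : forall u, P u -> u < N.
  move=> u /mem_sumn Hu; have := leq_pmulr (sumn M) n0; rewrite /N /K mulSn; lia.
have nN : n <= N by rewrite /N /K mulSn leq_addr.
pose Q := Qb n P.
pose T := map (addn m) (filter Q (iota 0 N)).
have Hperm : perm_eq M (map (addn m) (filter P (iota 0 N))).
  apply: uniq_perm.
  - by apply: (sorted_uniq (leT := ltn) ltn_trans ltnn).
  - rewrite map_inj_uniq; last exact: addnI.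
    exact: filter_uniq (iota_uniq 0 N).
  move=> x; apply/idP/mapP.
    move=> xM; exists (x - m); last by have := Mge _ xM; lia.
    have Px : P (x - m) by rewrite /P subnKC ?Mge.
    by rewrite mem_filter Px mem_iota add0n Pb.
  by case=> u; rewrite mem_filter => /andP [Pu _] ->.
have cntn : forall j, cntb n P j <= n.
  by move=> j; rewrite /cntb; apply: leq_trans (count_size _ _) _; rewrite size_iota.
have HsizeM : size M = \sum_(0 <= j < K) cntb n P j.
  by rewrite (perm_size Hperm) size_map size_filter count_blocks.
have HsizeT : size T = \sum_(0 <= j < K) cntb n P j.
  rewrite size_map size_filter count_blocks; apply: eq_bigr => j _.
  rewrite (eq_in_count (a2 := fun x => x < cntb n P j)).
    by rewrite -size_filter filter_iota_lt // size_iota.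
  move=> x; rewrite mem_iota add0n => xn.
  by rewrite /Q /Qb addnC modnMDl divnMDl // modn_small // divn_small // addn0.
have P0 : P 0 by rewrite /P addn0 -{1}Hnth mem_nth // Hsize.
have cnt0 : 0 < cntb n P 0.
  rewrite /cntb -has_count; apply/hasP; exists 0; first by rewrite mem_iota.
  by rewrite mul0n.
have HshT : shadow a b m T = iota m (cntb n P 0).
  rewrite /shadow /T filter_map.
  rewrite (eq_filter (a2 := fun u => u < n)); last first.
    by move=> u /=; rewrite leq_addr /= -addnA ltn_add2l.
  rewrite filter_swap filter_iota_lt //.
  rewrite (eq_in_filter (a2 := fun u => u < cntb n P 0)); last first.
    move=> x; rewrite mem_iota add0n => xn.
    by rewrite /Q /Qb modn_small // divn_small.
  by rewrite filter_iota_lt // -iotaDl addn0.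
have HshM : size (shadow a b m M) = cntb n P 0.
  rewrite /shadow size_filter ((permP Hperm) _) count_map -size_filter.
  rewrite (eq_filter (a2 := fun u => u < n)); last first.
    by move=> u /=; rewrite leq_addr /= -addnA ltn_add2l.
  rewrite filter_swap filter_iota_lt // size_filter /cntb.
  by apply: eq_count => x /=; rewrite mul0n addn0.
exists T; split; last first.
  split; last by rewrite HshT size_iota HshM.
  by exists (cntb n P 0).
split.
- rewrite /T sorted_map.
  apply: sub_sorted _ (sorted_filter ltn_trans _ (iota_ltn_sorted 0 N)).
  by move=> x y; rewrite /relpre /= ltn_add2l.
- by rewrite HsizeT -HsizeM.
- done.
- have N0 : 0 < N by lia.
  rewrite /T -(prednK N0) /= (_ : Q 0 = true) /= ?addn0 //.
  by rewrite /Q /Qb mod0n div0n.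
split => //.
- move=> x /mapP [u _ ->]; apply: HSm; lia.
move=> x alpha /mapP [u]; rewrite mem_filter mem_iota add0n => /andP [Qu uN] ->.
case=> _ [Hal [s [Hall Hsum]]] Hma.
apply/mapP; exists (alpha - m); last by lia.
rewrite mem_filter mem_iota add0n.
have -> : alpha - m = u - sumn s by lia.
have HQ : Q (u - sumn s) by apply: (Qb_S _ _ _ b0 ba HP) => //; lia.
rewrite HQ /=.
lia.
Qed.
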